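(* Consider the ''AME(3,d) quantum bit commitment'' protocol described in the context, for any integer $d\ge 2$. Then: (i) (Perfect hiding) Suppose Alice chooses $b\in\{0,1\}$ uniformly at random and follows the commit phase honestly. Then, whatever state Bob prepares in Step 1 (an arbitrary, possibly dishonest, state on $\texttt{anc}\otimes\mathcal{A}\otimes\mathcal{B}$, with $\mathcal B$ possibly enlarged by an arbitrary register of Bob), Bob cannot guess $b$ before the opening phase with probability larger than $1/2$. Equivalently, the commit channels $\mathcal M_0$ and $\mathcal M_1$ defined in the context satisfy $\mathcal M_0(\rho)=\mathcal M_1(\rho)$ for every state $\rho$. (ii) ($1/d$-honest-binding) If Alice is restricted to separable operations on her register $\mathcal{A}$, then $\max\{p_s(0),p_s(1)\}\le 1/d$, where $p_s(b)$ is defined in the context.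
   Context: Let $d\ge2$, $\omega=e^{2\pi i/d}$, and let $\{|k\rangle\}_{k=0}^{d-1}$ be the computational basis of $\mathbb C^d$ (arithmetic on labels mod $d$). Define $|\tilde k\rangle=\frac{1}{\sqrt d}\sum_{l=0}^{d-1}\omega^{-kl}|l\rangle$. For a permutation $\pi\in S_d$ of $\{0,\dots,d-1\}$ set $\mathbf B_{1,\pi}=\{|\pi(k)\rangle\}_k$ and $\mathbf B_{0,\pi}=\{|\widetilde{\pi(k)}\rangle\}_k$. Registers: $\texttt{anc}\cong\mathbb C^d$; Alice's register $\mathcal A=(\mathbb C^d)^{\otimes 3}$ (three qudits); Bob's register $\mathcal B\cong\mathbb C^d$. For $l\in\{0,\dots,d-1\}$ let $|\Phi_l\rangle=\frac1{\sqrt d}\sum_{j=0}^{d-1}\omega^{jl}|jjj\rangle_{\mathcal A}|j+l\rangle_{\mathcal B}$. Protocol. Commit phase: (1) Bob prepares $|\Xi\rangle=\frac1{\sqrt d}\sum_{l=0}^{d-1}|l\rangle_{\texttt{anc}}|\Phi_l\rangle_{\mathcal A\mathcal B}$ and sends registers $\texttt{anc}$ and $\mathcal A$ to Alice. (2) Alice picks $\pi\in S_d$ uniformly at random and a bit $b$; to commit $b$ she measures $\texttt{anc}$ in basis $\mathbf B_{b,\pi}$, obtains the basis element with index $m$ (i.e. $|\pi(m)\rangle$ or $|\widetilde{\pi(m)}\rangle$), and announces $m$. In the honest case the resulting state on $\mathcal A\mathcal B$ is $|\Xi^1_{\pi,m}\rangle=|\Phi_{\pi(m)}\rangle$ if $b=1$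 and $|\Xi^0_{\pi,m}\rangle=\frac1{\sqrt d}\sum_{l=0}^{d-1}\omega^{\pi(m)l}|\Phi_l\rangle$ if $b=0$. Opening phase: (3) Alice announces a bit $b'$ and a permutation $\pi'$ and sends register $\mathcal A$ to Bob. (4) Bob projects the state of $\mathcal A\mathcal B$ onto $|\Xi^{b'}_{\pi',m}\rangle$ and accepts iff the projection succeeds. Commit channels (acting on $\texttt{anc}\otimes\mathcal A\otimes\mathcal B$, outcome recorded as $|m\rangle$ in $\texttt{anc}$): $\mathcal M_0(\rho)=\frac1{d!}\sum_{\pi\in S_d}\sum_{m}(|m\rangle\langle\widetilde{\pi(m)}|\otimes I)\rho(|\widetilde{\pi(m)}\rangle\langle m|\otimes I)$ and $\mathcal M_1(\rho)=\frac1{d!}\sum_{\pi\in S_d}\sum_m(|m\rangle\langle\pi(m)|\otimes I)\rho(|\pi(m)\rangle\langle m|\otimes I)$. Separable operations: a channel on $\mathcal A$ is separable with respect to a bipartition $\mathcal A=\mathcal A_1\otimes\mathcal A_2$ (a split of the three qudits into two nonempty groups) if it is a trace-preserving convex combination of tensor products $\mathcal N_1\otimes\mathcal N_2$ of completely positive maps on $\mathcal A_1$ and $\mathcal A_2$; ''Alice is restricted to separable operations'' means that any channel she applies to $\mathcal A$ is separable with respect to some such bipartition (of her choice). Honest-binding: for $b\in\{0,1\}$, $p_s(b)$ is the probability that Alice, having honestly committed to $b$ (with some $\pi$ and outcome $m$), successfully opens $1-b$, i.e. the maximum over allowed channels $\mathcal N$ on $\mathcal A$ and announced permutations $\pi'$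 of the acceptance probability $F\big(|\Xi^{1-b}_{\pi',m}\rangle\langle\Xi^{1-b}_{\pi',m}|,(\mathcal N\otimes\mathrm{id}_{\mathcal B})(|\Xi^b_{\pi,m}\rangle\langle\Xi^b_{\pi,m}|)\big)$, where $F$ is the fidelity ($F(\rho,\sigma)=(\mathrm{Tr}\sqrt{\sqrt\sigma\rho\sqrt\sigma})^2$); the bound is required for all $\pi,m$. A protocol is $\varepsilon$-honest-binding if $\max\{p_s(0),p_s(1)\}\le\varepsilon$. *)

(* Defs.v *)
From HB Require Import structures.
From mathcomp Require Import all_boot all_order all_algebra all_fingroup.
From mathcomp Require Import reals trigo.
From mathcomp Require Export complex.
Set Implicit Arguments. Unset Strict Implicit. Unset Printing Implicit Defensive.
Import GRing.Theory Num.Theory.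
Local Open Scope ring_scope.
Local Open Scope complex_scope.

Section QuantumDefs.
Variable R : realType.
Local Notation C := R[i].

(* A Hilbert space C^T with computational basis indexed by the finType T;
   kets are coordinate functions, operators are matrices T x T. *)
Definition ket (T : finType) := T -> C.
Definition op (T : finType) := T -> T -> C.

Definition ketbra (T : finType) (u v : ket T) : op T :=
  fun x y => u x * (v y)^*.
Definition proj (T : finType) (u : ket T) : op T := ketbra u u.
Definition mulop (T : finType) (A B : op T) : op T :=
  fun x y => \sum_(z : T) A x z * B z y.
Definition adj (T : finType) (A : op T) : op T := fun x y => (A y x)^*.
Definition trace (T : finType) (A : op T) : C := \sum_(x : T) A x x.
Definition idop (T : finType) : op T := fun x y => (x == y)%:R.
Definition munit (T : finType) (a b : T) : op T :=
  fun x y => ((x == a) && (y == b))%:R.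
Definition conj_by (T : finType) (K A : op T) : op T :=
  mulop K (mulop A (adj K)).

(* positive semidefinite (complex order: <v, A v> is real and >= 0) *)
Definition psd (T : finType) (A : op T) : Prop :=
  forall v : ket T, 0 <= \sum_(x : T) \sum_(y : T) (v x)^* * A x y * v y.
Definition is_state (T : finType) (rho : op T) : Prop :=
  psd rho /\ trace rho = 1.
Definition povm2 (T : finType) (E0 E1 : op T) : Prop :=
  [/\ psd E0, psd E1 & forall x y, E0 x y + E1 x y = idop x y].

Definition lift1 (T E : finType) (X : op T) : op (T * E)%type :=
  fun x y => X x.1 y.1 * (x.2 == y.2)%:R.

Definition linear_opmap (T T' : finType) (N : op T -> op T') : Prop :=
  forall (a : C) (X Y : op T),
    N (fun x y => a * X x y + Y x y) = fun x y => a * N X x y + N Y x y.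

(* (N (x) id_U)(rho), N extended linearly (via matrix units) *)
Definition tens_id (T T' U : finType) (N : op T -> op T') (rho : op (T * U)%type)
  : op (T' * U)%type :=
  fun x y => \sum_(a : T) \sum_(b : T) N (munit a b) x.1 y.1 * rho (a, x.2) (b, y.2).

Definition cp_map (T T' : finType) (N : op T -> op T') : Prop :=
  linear_opmap N /\
  forall (U : finType) (rho : op (T * U)%type), psd rho -> psd (tens_id N rho).

Definition trace_preserving (T T' : finType) (N : op T -> op T') : Prop :=
  forall X : op T, trace (N X) = trace X.

Variable d : nat.

Definition omega : C := cos (2 * pi / d%:R) +i* sin (2 * pi / d%:R).
Definition sqrtd : C := (Num.sqrt (d%:R : R))%:C.

Definition addI (j l : 'I_d) : 'I_d := insubd j ((j + l) %% d)%N.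

Definition cbasis (k : 'I_d) : ket 'I_d := fun l => (l == k)%:R.
Definition fbasis (k : 'I_d) : ket 'I_d :=
  fun l => sqrtd^-1 * omega ^- (k * l).
Definition basisB (b : bool) (p : {perm 'I_d}) (k : 'I_d) : ket 'I_d :=
  if b then cbasis (p k) else fbasis (p k).

(* commit channel M_b on anc (x) E (E = all other registers, including A, B
   and any register of Bob); outcome m recorded as |m> in anc *)
Definition commit (E : finType) (b : bool) (rho : op ('I_d * E)%type) : op ('I_d * E)%type :=
  fun x y => ((d`!)%:R)^-1 * \sum_(p : {perm 'I_d}) \sum_(m : 'I_d)
      conj_by (lift1 (E:=E) (ketbra (cbasis m) (basisB b p m))) rho x y.

Definition guess_prob (E : finType) (rho : op ('I_d * E)%type) (E0 E1 : op ('I_d * E)%type) : C :=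
  2^-1 * trace (mulop E0 (commit false rho)) + 2^-1 * trace (mulop E1 (commit true rho)).

Definition Areg := {ffun 'I_3 -> 'I_d}.
Definition cst3 (j : 'I_d) : Areg := [ffun _ => j].

Definition Phi (l : 'I_d) : ket (Areg * 'I_d)%type :=
  fun x => sqrtd^-1 * \sum_(j : 'I_d)
     omega ^+ (j * l) * ((x.1 == cst3 j) && (x.2 == addI j l))%:R.

Definition Xi (b : bool) (p : {perm 'I_d}) (m : 'I_d) : ket (Areg * 'I_d)%type :=
  if b then Phi (p m)
  else fun x => sqrtd^-1 * \sum_(l : 'I_d) omega ^+ (p m * l) * Phi l x.

(* fidelity F(|psi><psi|, sigma) with a pure first argument = <psi|sigma|psi> *)
Definition fid_pure (T : finType) (psi : ket T) (sigma : op T) : C :=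
  \sum_(x : T) \sum_(y : T) (psi x)^* * sigma x y * psi y.

Definition loc (S : {set 'I_3}) := {ffun {i : 'I_3 | i \in S} -> 'I_d}.
Definition res (S : {set 'I_3}) (x : Areg) : loc S := [ffun i => x (val i)].

(* N1 (x) N2 w.r.t. the bipartition A = A_S (x) A_{~S} *)
Definition tensS (S : {set 'I_3})
  (N1 : op (loc S) -> op (loc S)) (N2 : op (loc (~: S)) -> op (loc (~: S)))
  (X : op Areg) : op Areg :=
  fun x y => \sum_(a : Areg) \sum_(b : Areg)
    X a b * N1 (munit (res S a) (res S b)) (res S x) (res S y)
          * N2 (munit (res (~: S) a) (res (~: S) b)) (res (~: S) x) (res (~: S) y).

Definition separable_channel (N : op Areg -> op Areg) : Prop :=
  exists S : {set 'I_3}, [/\ S != set0, ~: S != set0 &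
    exists (n : nat) (w : 'I_n -> R)
           (N1 : 'I_n -> op (loc S) -> op (loc S))
           (N2 : 'I_n -> op (loc (~: S)) -> op (loc (~: S))),
      [/\ forall i, 0 <= w i /\ cp_map (N1 i) /\ cp_map (N2 i),
          \sum_(i < n) w i = 1,
          N = (fun X x y => \sum_(i < n) (w i)%:C * tensS (N1 i) (N2 i) X x y)
        & trace_preserving N]].

End QuantumDefs.

(* Main.v *)
Require Import Defs.
From HB Require Import structures.
From mathcomp Require Import all_boot all_order all_algebra all_fingroup.
From mathcomp Require Import reals trigo.
From mathcomp Require Import complex.
From mathcomp Require Import ring lra zify.
From Stdlib Require Import FunctionalExtensionality.
Import Order.TTheory GRing.Theory Num.Theory.
Local Open Scope ring_scope.
Local Open Scope complex_scope.
Local Open Scope ring_scope.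
Set Implicit Arguments. Unset Strict Implicit. Unset Printing Implicit Defensive.

Lemma conjE (R : realType) (x : R[i]) : x^* = conjc x.
Proof. by case: x. Qed.

Section Omega.
Variable R : realType.
Local Notation C := R[i].
Variable d : nat.
Hypothesis hd : (2 <= d)%N.

Local Notation w := (omega R d).
Definition th : R := 2 * pi / d%:R.

Lemma omegaX n : w ^+ n = cos (n%:R * th) +i* sin (n%:R * th).
Proof.
elim: n => [|n IH]; first by rewrite expr0 mul0r cos0 sin0.
rewrite exprS IH /omega -/th /= -natr1 mulrDl mul1r cosD sinD.
congr (_ +i* _); ring.
Qed.

Lemma dgt0 : (0 < d%:R :> R).
Proof. rewrite ltr0n; lia. Qed.

Lemma omega_d : w ^+ d = 1.
Proof.
rewrite omegaX /th mulrCA divff ?mulr1; last by rewrite gt_eqF // dgt0.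
by rewrite mulr_natl cos2pi sin2pi.
Qed.

Lemma omegaX_neq1 n : (0 < n < d)%N -> w ^+ n != 1.
Proof.
move=> /andP [n0 nd]; rewrite omegaX.
set x := n%:R * th.
have x0 : 0 < x.
  by rewrite /x /th mulr_gt0 ?ltr0n ?divr_gt0 ?dgt0 ?mulr_gt0 ?pi_gt0.
have x2 : x < pi *+ 2.
  have hr : n%:R / d%:R < 1 :> R.
    by rewrite ltr_pdivrMr ?dgt0 // mul1r ltr_nat.
  have -> : x = 2 * pi * (n%:R / d%:R) by rewrite /x /th; field; rewrite gt_eqF ?dgt0.
  have := pi_gt0 R; rewrite -mulr_natl; nra.
apply/negP => /eqP [hc hs].
have [xpi|xpi|xpi] := ltrgtP x pi.
- have : 0 < sin x by apply: sin_gt0_pi; rewrite x0 xpi.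
  by rewrite hs ltxx.
- have : 0 < sin (x - pi) by apply: sin_gt0_pi; rewrite subr_gt0 xpi /=; lra.
  have := sinDpi (x - pi); rewrite subrK hs => h.
  have -> : sin (x - pi) = 0 by rewrite -[sin _]opprK -h oppr0.
  by rewrite ltxx.
- by move: hc; rewrite xpi cospi; lra.
Qed.

Lemma norm_omega : `|w| = 1.
Proof.
rewrite /omega normc_def /= cos2Dsin2 sqrtr1 //.
Qed.

Lemma conj_omega : w^* = w^-1.
Proof.
have h : w * w^* = 1 by rewrite -normCK norm_omega expr1n.
have wn0 : w != 0 by rewrite -normr_eq0 norm_omega oner_eq0.
by rewrite -[LHS]mul1r -(mulVf wn0) -mulrA h mulr1.
Qed.

End Omega.

Section Orth.
Variable R : realType.
Local Notation C := R[i].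
Variable d : nat.
Hypothesis hd : (2 <= d)%N.
Local Notation w := (omega R d).

Lemma omega_neq0 : w != 0.
Proof. by rewrite -normr_eq0 norm_omega oner_eq0. Qed.

Lemma omegaX_inj (a b : nat) : (a < d)%N -> (b < d)%N -> w ^+ a = w ^+ b -> a = b.
Proof.
wlog ab : a b / (a <= b)%N.
  move=> H ha hb e; case: (leqP a b) => h; first exact: H.
  by symmetry; apply: H => //; exact: ltnW.
move=> ha hb e; apply/eqP; rewrite eqn_leq ab /= leqNgt; apply/negP => lt.
have : w ^+ (b - a) != 1 by apply: omegaX_neq1 => //; apply/andP; split; lia.
rewrite -(subnKC ab) exprD in e.
have : w ^+ a * 1 = w ^+ a * w ^+ (b - a) by rewrite mulr1 {1}e.
by move/mulfI => /(_ (expf_neq0 _ omega_neq0)) <-; rewrite eqxx.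
Qed.

Lemma omega_orth (a b : 'I_d) :
  \sum_(k < d) w ^+ (k * a) * w ^- (k * b) = (a == b)%:R * d%:R.
Proof.
set z := w ^+ a / w ^+ b.
have -> : \sum_(k < d) w ^+ (k * a) * w ^- (k * b) = \sum_(k < d) z ^+ k.
  apply: eq_bigr => k _; rewrite /z exprMn exprVn -!exprM mulnC [(b * k)%N]mulnC //.
case: eqP => [e|ne].
  rewrite /z e divff ?expf_neq0 ?omega_neq0 //.
  by rewrite (eq_bigr (fun _ => 1)) => [|k _]; rewrite ?expr1n // sumr_const card_ord mul1r.
have z1 : z != 1.
  apply/negP => /eqP h; apply: ne; apply/val_inj/(@omegaX_inj a b (ltn_ord a) (ltn_ord b)).
  by rewrite -[w ^+ a](divfK (expf_neq0 b omega_neq0)) -/z h mul1r.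
have zd : z ^+ d = 1.
  by rewrite /z exprMn exprVn -!exprM mulnC [(b * d)%N]mulnC !exprM omega_d // !expr1n invr1 mulr1.
have := subrX1 z d; rewrite zd subrr => /esym /eqP; rewrite mulf_eq0 subr_eq0 (negbTE z1) /= => /eqP ->.
by rewrite mul0r.
Qed.

End Orth.

Section Gen.
Variable R : realType.
Local Notation C := R[i].

Lemma sum_delta (T : finType) (x : T) (F : T -> C) : \sum_z (z == x)%:R * F z = F x.
Proof.
rewrite (bigD1 x) //= eqxx mul1r big1 ?addr0 // => z /negbTE ->; by rewrite mul0r.
Qed.

Lemma sum_delta_r (T : finType) (x : T) (F : T -> C) : \sum_z F z * (z == x)%:R = F x.
Proof. by rewrite -[RHS](sum_delta x); apply: eq_bigr => z _; rewrite mulrC. Qed.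

Lemma sum_deltaf (I T : finType) (f : I -> T) (H : T -> I -> C) :
  \sum_x \sum_k (x == f k)%:R * H x k = \sum_k H (f k) k.
Proof. by rewrite exchange_big; apply: eq_bigr => k _; exact: sum_delta. Qed.

Lemma sum2 (T : finType) (x y : T) (a b : C) (F : T -> C) :
  \sum_z F z * ((z == x)%:R * a + (z == y)%:R * b) = F x * a + F y * b.
Proof.
rewrite (eq_bigr (fun z => (z == x)%:R * (F z * a) + (z == y)%:R * (F z * b))).
  by rewrite big_split /= !sum_delta.
by move=> z _; rewrite mulrDr !mulrA ![F z * _]mulrC.
Qed.

Lemma sum2l (T : finType) (x y : T) (a b : C) (F : T -> C) :
  \sum_z ((z == x)%:R * a + (z == y)%:R * b) * F z = a * F x + b * F y.
Proof.
by rewrite -[a * _]mulrC -[b * _]mulrC -sum2; apply: eq_bigr => z _; rewrite mulrC.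
Qed.

Lemma quad2 (T : finType) (A : op R T) (x y : T) (a b : C) :
  \sum_z \sum_w ((fun z => (z == x)%:R * a + (z == y)%:R * b) z)^* * A z w *
      (fun z => (z == x)%:R * a + (z == y)%:R * b) w =
  a^* * a * A x x + a^* * b * A x y + b^* * a * A y x + b^* * b * A y y.
Proof.
rewrite (eq_bigr (fun z => ((z == x)%:R * a^* + (z == y)%:R * b^*) *
                           (A z x * a + A z y * b))).
  by rewrite sum2l; ring.
move=> z _ /=; rewrite sum2 rmorphD /= !rmorphM /= !conjC_nat; ring.
Qed.

Lemma psd_quad (T : finType) (A : op R T) x y a b : psd A ->
  0 <= a^* * a * A x x + a^* * b * A x y + b^* * a * A y x + b^* * b * A y y.
Proof. by move=> h; rewrite -quad2; apply: h. Qed.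

Lemma psd_facts (T : finType) (A : op R T) x y : psd A ->
  [/\ 0 <= A x x, A y x = (A x y)^* & `|A x y| ^+ 2 <= A x x * A y y].
Proof.
move=> h; have q := fun a b => psd_quad x y a b h.
move: q; rewrite -add_Re2_Im2 !conjE.
case: (A x x) => p1 p2; case: (A x y) => c1 c2; case: (A y x) => e1 e2; case: (A y y) => q1 q2 => q.
move: (q 1 0) (q 0 1) (q 1 1) (q 1 'i) (q (q1 +i* 0) ((-c1) +i* c2))
  (q ((-c1) +i* (-c2)) (p1 +i* 0)) (q 1 ((-c1) +i* c2)).
rewrite !conjE !lecE /= => /andP[/eqP H1 G1] /andP[/eqP H2 G2] /andP[/eqP H3 G3] /andP[/eqP H4 G4]
  /andP[_ G5] /andP[_ G6] /andP[_ G7].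
have P2 : p2 = 0 by lra.
have Q2 : q2 = 0 by lra.
subst p2 q2.
have E1 : e1 = c1 by lra.
have E2 : e2 = - c2 by lra.
subst e1 e2.
split.
- by apply/andP; split; [apply/eqP|]; lra.
- by [].
apply/andP; split; first by apply/eqP; lra.
rewrite !mul0r subr0.
have p1g : 0 <= p1 by lra.
have q1g : 0 <= q1 by lra.
set n := c1 ^+ 2 + c2 ^+ 2.
have n0 : 0 <= n by rewrite /n addr_ge0 // sqr_ge0.
have G5' : 0 <= q1 * (q1 * p1 - n) by rewrite /n; lra.
have G6' : 0 <= p1 * (p1 * q1 - n) by rewrite /n; lra.
have G7' : 0 <= p1 + q1 * n - 2 * n by rewrite /n; lra.
have [q0|q0] : q1 = 0 \/ 0 < q1 by lra.
  subst q1; rewrite mulr0.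
  have [p0|p0] : p1 = 0 \/ 0 < p1 by lra.
    by subst p1; lra.
  nra.
nra.
Qed.
End Gen.

Section CP.
Variable R : realType.
Local Notation C := R[i].

Lemma psd_ext (T : finType) (A B : op R T) : (forall x y, A x y = B x y) -> psd A -> psd B.
Proof.
move=> e h v; have := h v; congr (0 <= _); apply: eq_bigr => x _; apply: eq_bigr => y _.
by rewrite e.
Qed.

Lemma psd_proj (T : finType) (u : ket R T) : psd (proj u).
Proof.
move=> v.
have -> : \sum_x \sum_y (v x)^* * proj u x y * v y =
   (\sum_x (v x)^* * u x) * (\sum_x (v x)^* * u x)^*.
  rewrite mulr_suml; apply: eq_bigr => x _.
  rewrite rmorph_sum mulr_sumr; apply: eq_bigr => y _.
  by rewrite /proj /ketbra rmorphM /= conjCK; ring.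
exact: mul_conjC_ge0.
Qed.

Lemma choi_psd (T T' : finType) (N : op R T -> op R T') : cp_map N ->
  psd (fun x y : T' * T => N (munit R x.2 y.2) x.1 y.1).
Proof.
move=> [_ cp].
pose Om : ket R (T * T)%type := fun x => (x.1 == x.2)%:R.
apply: psd_ext (cp T (proj Om) (psd_proj Om)) => x y.
rewrite /tens_id /proj /ketbra /Om /=.
rewrite (eq_bigr (fun a => (a == x.2)%:R * N (munit R a y.2) x.1 y.1)).
  exact: sum_delta.
move=> a _.
rewrite (eq_bigr (fun b => (b == y.2)%:R * ((a == x.2)%:R * N (munit R a b) x.1 y.1))).
  by rewrite sum_delta.
by move=> b _; rewrite conjC_nat; ring.
Qed.

End CP.

Section Hiding.
Variable R : realType.
Local Notation C := R[i].
Variable d : nat.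
Hypothesis hd : (2 <= d)%N.
Local Notation w := (omega R d).
Local Notation s := (sqrtd R d).

Lemma sum_pair (I J : finType) (F : I * J -> C) :
  \sum_z F z = \sum_i \sum_j F (i, j).
Proof. by rewrite pair_bigA; apply: eq_bigr => -[]. Qed.

Lemma sum_pair_delta (I J : finType) (j0 : J) (F : I * J -> C) :
  \sum_(z : I * J) (j0 == z.2)%:R * F z = \sum_i F (i, j0).
Proof.
rewrite sum_pair; apply: eq_bigr => i _ /=.
by rewrite (eq_bigr (fun j => (j == j0)%:R * F (i, j))) ?sum_delta // => j _; rewrite eq_sym.
Qed.

Lemma sqrtd_sq : s ^+ 2 = d%:R.
Proof.
by rewrite /sqrtd -rmorphXn /= sqr_sqrtr ?ler0n // rmorph_nat.
Qed.

Lemma sqrtd_conj : s^* = s.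
Proof. by rewrite conjE /sqrtd conjc_real. Qed.

Lemma sqrtd_neq0 : s != 0.
Proof.
apply/negP => /eqP h; move: sqrtd_sq; rewrite h expr0n /= => /eqP.
by rewrite eq_sym pnatr_eq0; case: d hd.
Qed.

Lemma conj_omegaV n : (w ^- n)^* = w ^+ n.
Proof. by rewrite rmorphV ?unitfE ?expf_neq0 ?omega_neq0 //= rmorphXn /= conj_omega exprVn invrK. Qed.

Definition bas (b : bool) (k : 'I_d) : ket R 'I_d := if b then cbasis R k else fbasis R k.

Lemma bas_compl b (z u : 'I_d) : \sum_k (bas b k z)^* * bas b k u = (z == u)%:R.
Proof.
case: b; rewrite /bas.
  rewrite /cbasis; under eq_bigr => k _ do rewrite conjC_nat.
  rewrite (eq_bigr (fun k => (k == z)%:R * (k == u)%:R)) ?sum_delta // => k _.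
  by rewrite (eq_sym z) (eq_sym u).
rewrite /fbasis.
under eq_bigr => k _ do rewrite rmorphM /= conj_omegaV rmorphV ?unitfE ?sqrtd_neq0 //= sqrtd_conj.
rewrite (eq_bigr (fun k : 'I_d => s^-1 * s^-1 * (w ^+ (k * z) * w ^- (k * u)))); last first.
  by move=> k _; ring.
rewrite -mulr_sumr omega_orth // -expr2 exprVn sqrtd_sq mulrC -mulrA mulfV ?mulr1 //.
by rewrite pnatr_eq0; case: d hd.
Qed.

End Hiding.

Section Hiding2.
Variable R : realType.
Local Notation C := R[i].
Variable d : nat.
Hypothesis hd : (2 <= d)%N.
Variable E : finType.

Lemma conj_term b p m (rho : op R ('I_d * E)%type) x y :
  conj_by (lift1 (ketbra (cbasis R m) (basisB R b p m))) rho x y =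
  (x.1 == m)%:R * (y.1 == m)%:R * \sum_z1 \sum_u1
      (bas R b (p m) z1)^* * bas R b (p m) u1 * rho (z1, x.2) (u1, y.2).
Proof.
have eB : basisB R b p m = bas R b (p m) by case: b.
rewrite eB /conj_by /mulop /adj /lift1 /ketbra /cbasis.
set B := bas R b (p m).
have inner : forall z, \sum_u rho z u * ((y.1 == m)%:R * (B u.1)^* * (y.2 == u.2)%:R)^*
    = (y.1 == m)%:R * \sum_u1 B u1 * rho z (u1, y.2).
  move=> z.
  rewrite (eq_bigr (fun u => (y.2 == u.2)%:R * ((y.1 == m)%:R * (B u.1 * rho z u)))).
    by rewrite sum_pair_delta mulr_sumr.
  by move=> u _; rewrite !rmorphM /= !conjC_nat conjCK; ring.
under eq_bigr => z _ do rewrite inner.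
rewrite (eq_bigr (fun z => (x.2 == z.2)%:R * ((x.1 == m)%:R * (y.1 == m)%:R *
           ((B z.1)^* * \sum_u1 B u1 * rho z (u1, y.2))))); last by move=> z _; ring.
rewrite sum_pair_delta -mulr_sumr; congr (_ * _); apply: eq_bigr => z1 _ /=.
by rewrite mulr_sumr; apply: eq_bigr => u1 _; rewrite mulrA.
Qed.

Lemma perm_avg (m : 'I_d) (f : 'I_d -> C) :
  \sum_(p : {perm 'I_d}) f (p m) = (d`!)%:R / d%:R * \sum_k f k.
Proof.
have dn0 : (d%:R : C) != 0 by rewrite pnatr_eq0; case: d hd.
have indep : forall m', \sum_(p : {perm 'I_d}) f (p m) = \sum_(p : {perm 'I_d}) f (p m').
  move=> m'; rewrite [RHS](reindex_inj (mulgI (tperm m m'))) /=.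
  by apply: eq_bigr => p _; rewrite permM tpermR.
have : d%:R * \sum_(p : {perm 'I_d}) f (p m) = (d`!)%:R * \sum_k f k.
  have -> : d%:R * \sum_(p : {perm 'I_d}) f (p m) = \sum_(m' : 'I_d) \sum_(p : {perm 'I_d}) f (p m').
    rewrite [RHS](eq_bigr (fun _ => \sum_(p : {perm 'I_d}) f (p m))); last first.
      by move=> m' _; rewrite (indep m').
    by rewrite sumr_const card_ord mulr_natl.
  rewrite exchange_big /=.
  transitivity (\sum_(p : {perm 'I_d}) \sum_k f k).
    by apply: eq_bigr => p _; rewrite [RHS](reindex_inj (@perm_inj _ p)).
  by rewrite sumr_const card_Sn mulr_natl.
move=> h; apply: (mulfI dn0); by rewrite h mulrA [d%:R * _]mulrC divfK.
Qed.

End Hiding2.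

Section Hiding3.
Variable R : realType.
Local Notation C := R[i].
Variable d : nat.
Hypothesis hd : (2 <= d)%N.
Variable E : finType.

Lemma commit_formula b (rho : op R ('I_d * E)%type) x y :
  commit b rho x y = (x.1 == y.1)%:R * (d%:R^-1 * \sum_z rho (z, x.2) (z, y.2)).
Proof.
pose H k := \sum_z1 \sum_u1 (bas R b k z1)^* * bas R b k u1 * rho (z1, x.2) (u1, y.2).
have e1 : forall p : {perm 'I_d}, \sum_m conj_by (lift1 (ketbra (cbasis R m) (basisB R b p m))) rho x y
     = (x.1 == y.1)%:R * H (p x.1).
  move=> p; under eq_bigr => m _ do rewrite conj_term.
  rewrite (eq_bigr (fun m => (m == x.1)%:R * ((y.1 == m)%:R * H (p m)))) ?sum_delta.
    by rewrite eq_sym.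
  by move=> m _; rewrite /H eq_sym mulrA.
have e2 : \sum_k H k = \sum_z rho (z, x.2) (z, y.2).
  rewrite /H exchange_big /=; apply: eq_bigr => z1 _.
  rewrite exchange_big /=.
  rewrite (eq_bigr (fun u1 => (u1 == z1)%:R * rho (z1, x.2) (u1, y.2))) ?sum_delta //.
  move=> u1 _; rewrite -mulr_suml bas_compl // eq_sym.
  by [].
have dn0 : (d%:R : C) != 0 by rewrite pnatr_eq0; case: d hd.
have fn0 : ((d`!)%:R : C) != 0 by rewrite pnatr_eq0 -lt0n fact_gt0.
rewrite /commit (eq_bigr _ (fun p _ => e1 p)) -mulr_sumr perm_avg // e2.
by field; apply/andP.
Qed.

Lemma hiding (rho : op R ('I_d * E)%type) : commit false rho = commit true rho.
Proof.
apply: functional_extensionality => x; apply: functional_extensionality => y.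
by rewrite !commit_formula.
Qed.

Lemma trace_commit (rho : op R ('I_d * E)%type) : trace (commit true rho) = trace rho.
Proof.
have dn0 : (d%:R : C) != 0 by rewrite pnatr_eq0; case: d hd.
rewrite /trace sum_pair.
under eq_bigr => i _ do under eq_bigr => j _ do rewrite commit_formula //= eqxx mul1r.
rewrite exchange_big /= [RHS]sum_pair [RHS]exchange_big /=.
apply: eq_bigr => j _.
by rewrite sumr_const card_ord -mulrnAl -mulr_natr mulVf // mul1r.
Qed.

Lemma part1 (rho : op R ('I_d * E)%type) : is_state rho ->
  commit false rho = commit true rho /\ (forall E0 E1 : op R ('I_d * E)%type, povm2 E0 E1 -> guess_prob rho E0 E1 <= 2^-1).
Proof.
move=> [_ tr1]; split; first exact: hiding.
move=> E0 E1 [_ _ hE].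
rewrite /guess_prob hiding -mulrDr.
have -> : trace (mulop E0 (commit true rho)) + trace (mulop E1 (commit true rho)) =
          trace (commit true rho).
  rewrite /trace /mulop -big_split /=; apply: eq_bigr => x _.
  rewrite -big_split /=.
  rewrite (eq_bigr (fun z => (z == x)%:R * commit true rho z x)) ?sum_delta //.
  by move=> z _; rewrite -mulrDl hE /idop eq_sym.
by rewrite trace_commit tr1 mulr1.
Qed.
End Hiding3.

Section Expand.
Variable R : realType.
Local Notation C := R[i].
Variable d : nat.
Local Notation A := (Areg d).

Definition structured (psi : ket R (A * 'I_d)%type) (phi : 'I_d -> ket R 'I_d) :=
  forall x, psi x = \sum_j (x.1 == cst3 j)%:R * phi j x.2.

Lemma L1 psi phi (h : A -> C) z : structured psi phi ->
  \sum_a h a * psi (a, z) = \sum_j h (cst3 j) * phi j z.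
Proof.
move=> st; under eq_bigr => a _ do rewrite st mulr_sumr.
rewrite -(sum_deltaf (@cst3 d) (fun a j => h a * phi j z)).
by apply: eq_bigr => a _; apply: eq_bigr => j _ /=; ring.
Qed.

Lemma L1c psi phi (h : A -> C) z : structured psi phi ->
  \sum_a h a * (psi (a, z))^* = \sum_j h (cst3 j) * (phi j z)^*.
Proof.
move=> st; under eq_bigr => a _ do rewrite st rmorph_sum mulr_sumr.
rewrite -(sum_deltaf (@cst3 d) (fun a j => h a * (phi j z)^*)).
by apply: eq_bigr => a _; apply: eq_bigr => j _ /=; rewrite rmorphM /= conjC_nat; ring.
Qed.

Lemma reorder6 (T : finType) (F : T -> T -> T -> T -> T -> T -> C) :
  \sum_a \sum_b \sum_c \sum_e \sum_f \sum_g F a b c e f g =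
  \sum_b \sum_f \sum_e \sum_g \sum_a \sum_c F a b c e f g.
Proof.
rewrite exchange_big; apply: eq_bigr => b _.
under eq_bigr => a _ do under eq_bigr => c _ do rewrite exchange_big.
under eq_bigr => a _ do rewrite exchange_big.
rewrite exchange_big.
apply: eq_bigr => f _.
under eq_bigr => a _ do rewrite exchange_big.
rewrite exchange_big; apply: eq_bigr => e _.
under eq_bigr => a _ do rewrite exchange_big.
by rewrite exchange_big.
Qed.

End Expand.

Section Expand2.
Variable R : realType.
Local Notation C := R[i].
Variable d : nat.
Local Notation A := (Areg d).

Lemma L1r psi phi (h : A -> C) z : structured psi phi ->
  \sum_a psi (a, z) * h a = \sum_j phi j z * h (cst3 j).
Proof.
move=> st; rewrite (eq_bigr (fun a => h a * psi (a, z))); last by move=> a _; rewrite mulrC.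
by rewrite (L1 h z st); apply: eq_bigr => j _; rewrite mulrC.
Qed.

Lemma L1cr psi phi (h : A -> C) z : structured psi phi ->
  \sum_a (psi (a, z))^* * h a = \sum_j (phi j z)^* * h (cst3 j).
Proof.
move=> st; rewrite (eq_bigr (fun a => h a * (psi (a, z))^*)); last by move=> a _; rewrite mulrC.
by rewrite (L1c h z st); apply: eq_bigr => j _; rewrite mulrC.
Qed.

Lemma fid_expand psi phi psi' phi' (N : op R A -> op R A) :
  structured psi phi -> structured psi' phi' ->
  fid_pure psi' (tens_id N (proj psi)) =
  \sum_k \sum_j \sum_k' \sum_j' (\sum_z (phi' k z)^* * phi j z) *
     (\sum_z (phi' k' z)^* * phi j' z)^* * N (munit R (cst3 j) (cst3 j')) (cst3 k) (cst3 k').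
Proof.
move=> st st'.
pose M j j' x1 y1 := N (munit R (cst3 j) (cst3 j')) x1 y1.
have sig : forall x y : A * 'I_d,
    \sum_a \sum_b N (munit R a b) x.1 y.1 * (psi (a, x.2) * (psi (b, y.2))^*) =
    \sum_j \sum_j' M j j' x.1 y.1 * (phi j x.2 * (phi j' y.2)^*).
  move=> x y.
  transitivity (\sum_a \sum_j' (N (munit R a (cst3 j')) x.1 y.1 * psi (a, x.2)) * (phi j' y.2)^*).
    apply: eq_bigr => a _.
    rewrite -(L1c (fun b => N (munit R a b) x.1 y.1 * psi (a, x.2)) y.2 st).
    by apply: eq_bigr => b _; ring.
  rewrite exchange_big /=.
  transitivity (\sum_j' \sum_j (N (munit R (cst3 j) (cst3 j')) x.1 y.1 * (phi j' y.2)^*) * phi j x.2).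
    apply: eq_bigr => j' _.
    rewrite -(L1 (fun a => N (munit R a (cst3 j')) x.1 y.1 * (phi j' y.2)^*) x.2 st).
    by apply: eq_bigr => a _; ring.
  by rewrite exchange_big; apply: eq_bigr => j _; apply: eq_bigr => j' _; rewrite /M; ring.
rewrite /fid_pure /tens_id /proj /ketbra.
under eq_bigr => x _ do under eq_bigr => y _ do rewrite sig.
rewrite sum_pair exchange_big /=.
transitivity (\sum_x2 \sum_k (phi' k x2)^* * \sum_(y : A * 'I_d)
   (\sum_j \sum_j' M j j' (cst3 k) y.1 * (phi j x2 * (phi j' y.2)^*)) * psi' y).
  apply: eq_bigr => x2 _.
  rewrite -(L1cr (fun x1 => \sum_(y : A * 'I_d)
     (\sum_j \sum_j' M j j' x1 y.1 * (phi j x2 * (phi j' y.2)^*)) * psi' y) x2 st').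
  by apply: eq_bigr => x1 _ /=; rewrite mulr_sumr; apply: eq_bigr => y _; rewrite mulrA.
transitivity (\sum_x2 \sum_k (phi' k x2)^* * \sum_y2 \sum_k'
   (\sum_j \sum_j' M j j' (cst3 k) (cst3 k') * (phi j x2 * (phi j' y2)^*)) * phi' k' y2).
  apply: eq_bigr => x2 _; apply: eq_bigr => k _; congr (_ * _).
  rewrite sum_pair exchange_big /=; apply: eq_bigr => y2 _.
  by rewrite (L1 (fun y1 => \sum_j \sum_j' M j j' (cst3 k) y1 * (phi j x2 * (phi j' y2)^*)) y2 st').
transitivity (\sum_x2 \sum_k \sum_y2 \sum_k' \sum_j \sum_j'
   (phi' k x2)^* * (M j j' (cst3 k) (cst3 k') * (phi j x2 * (phi j' y2)^*)) * phi' k' y2).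
  apply: eq_bigr => x2 _; apply: eq_bigr => k _.
  rewrite mulr_sumr; apply: eq_bigr => y2 _.
  rewrite mulr_sumr; apply: eq_bigr => k' _.
  rewrite mulr_suml mulr_sumr; apply: eq_bigr => j _.
  rewrite mulr_suml mulr_sumr; apply: eq_bigr => j' _.
  ring.
rewrite reorder6; apply: eq_bigr => k _; apply: eq_bigr => j _; apply: eq_bigr => k' _;
  apply: eq_bigr => j' _.
rewrite rmorph_sum mulr_suml mulr_suml; apply: eq_bigr => x2 _.
rewrite mulr_sumr mulr_suml; apply: eq_bigr => y2 _.
by rewrite rmorphM /= conjCK /M; ring.
Qed.

End Expand2.

Lemma modn_small2 (x d : nat) : (x < 2 * d -> x %% d = if x < d then x else x - d)%N.
Proof.
move=> h2; case: ifP => h1; first exact: modn_small.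
have e : x = (x - d + d)%N by rewrite subnK //; lia.
by rewrite {1}e modnDr modn_small //; lia.
Qed.

Section States.
Variable R : realType.
Local Notation C := R[i].
Variable d : nat.
Hypothesis hd : (2 <= d)%N.
Local Notation w := (omega R d).
Local Notation s := (sqrtd R d).

Lemma addI_sol (j z : 'I_d) : exists l0 : 'I_d, forall l : 'I_d, (z == addI j l) = (l == l0).
Proof.
have d0 : (0 < d)%N by lia.
exists (Ordinal (ltn_pmod (z + (d - j)) d0)) => l.
have hv : (val (addI j l) = (j + l) %% d)%N by rewrite /addI val_insubd ltn_pmod.
apply/idP/idP => /eqP h; apply/eqP.
  apply/val_inj => /=; move: h => /(congr1 val); rewrite hv /= => h.
  have jl := ltn_ord j; have ll := ltn_ord l; have zl := ltn_ord z.
  rewrite (@modn_small2 (z + (d - j)) d) ?h; last lia.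
  move: h; rewrite (@modn_small2 (j + l) d); last lia.
  by case: ifP; case: ifP => *; lia.
apply/val_inj; rewrite hv h /=.
have jl := ltn_ord j; have ll := ltn_ord l; have zl := ltn_ord z.
rewrite (@modn_small2 (z + (d - j)) d); last lia.
case: ifP => h1; rewrite (@modn_small2 (j + _) d); try lia; case: ifP => h2; lia.
Qed.

Definition phiP (l j z : 'I_d) : C := s^-1 * (w ^+ (j * l) * (z == addI j l)%:R).
Definition phiX (t j z : 'I_d) : C := s^-1 * \sum_(l : 'I_d) w ^+ (t * l) * phiP l j z.

Lemma Phi_struct l : structured (Phi R l) (phiP l).
Proof.
move=> x; rewrite /Phi mulr_sumr; apply: eq_bigr => j _.
by rewrite -mulnb natrM /phiP; ring.
Qed.

Lemma Xi0_struct p m : structured (Xi R false p m) (phiX (p m)).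
Proof.
move=> x; rewrite /Xi /phiX.
under eq_bigr => l _ do rewrite Phi_struct mulr_sumr.
rewrite exchange_big mulr_sumr; apply: eq_bigr => j _ /=.
rewrite mulr_sumr mulr_sumr mulr_sumr; apply: eq_bigr => l _; ring.
Qed.

Lemma s_gt0 : 0 < s.
Proof. by rewrite /sqrtd ltcR sqrtr_gt0 ltr0n; lia. Qed.

Lemma norm_s : `|s| = s.
Proof. by rewrite ger0_norm // ltW // s_gt0. Qed.

Lemma norm_wX n : `|w ^+ n| = 1.
Proof. by rewrite normrX norm_omega // expr1n. Qed.

Lemma norm_phiP l j z : `|phiP l j z| = s^-1 * (z == addI j l)%:R.
Proof. by rewrite /phiP !normrM normrV ?unitfE ?sqrtd_neq0 // norm_s norm_wX mul1r normr_nat. Qed.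

Lemma sum_norm_phiP l j : \sum_z `|phiP l j z| = s^-1.
Proof.
under eq_bigr => z _ do rewrite norm_phiP.
by rewrite -mulr_sumr (eq_bigr (fun z => (z == addI j l)%:R * 1)) ?sum_delta ?mulr1 // => z _; rewrite mulr1.
Qed.

Lemma s_inv2 : s^-1 * s^-1 = d%:R^-1.
Proof. by rewrite -invfM -expr2 sqrtd_sq. Qed.

Lemma norm_phiX_le t j z : `|phiX t j z| <= d%:R^-1.
Proof.
rewrite /phiX normrM normrV ?unitfE ?sqrtd_neq0 // norm_s -s_inv2.
rewrite ler_pM2l ?invr_gt0 ?s_gt0 //.
apply: le_trans (ler_norm_sum _ _ _) _.
under eq_bigr => l _ do rewrite normrM norm_wX mul1r norm_phiP.
have [l0 hl0] := addI_sol j z.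
rewrite (eq_bigr (fun l => (l == l0)%:R * s^-1)) ?sum_delta // => l _.
by rewrite hl0 mulrC.
Qed.

End States.

Section CS.
Variable R : realType.
Local Notation C := R[i].

Lemma sqr_sum (K : finType) (f : K -> C) :
  (\sum_k f k) ^+ 2 = \sum_k \sum_k' f k * f k'.
Proof. by rewrite expr2 mulr_suml; apply: eq_bigr => k _; rewrite mulr_sumr. Qed.

Lemma amgm2 (s1 s2 a b : C) : 0 <= s1 -> 0 <= s2 -> 0 <= a -> 0 <= b ->
  (s1 * s2) ^+ 2 <= a * b -> s1 * s2 *+ 2 <= a + b.
Proof.
move=> h1 h2 ha hb h.
have hs : 0 <= s1 * s2 *+ 2 by rewrite mulrn_wge0 // mulr_ge0.
rewrite -(ler_pXn2r (n := 2)) // ?nnegrE ?addr_ge0 //.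
apply: le_trans (leif_le (real_leif_AGM2_scaled (ger0_real ha) (ger0_real hb))).
rewrite -mulr_natr exprMn -natrX mulrC -mulr_natl.
by rewrite mulr1 mulr_natl lerMn2r h orbT.
Qed.

Lemma cs_le (K : finType) (s p q : K -> C) :
  (forall k, 0 <= s k) -> (forall k, 0 <= p k) -> (forall k, 0 <= q k) ->
  (forall k, s k ^+ 2 <= p k * q k) ->
  (\sum_k s k) ^+ 2 <= (\sum_k p k) * (\sum_k q k).
Proof.
move=> hs hp hq h.
have e : (\sum_k p k) * (\sum_k q k) *+ 2 =
         \sum_k \sum_k' (p k * q k' + p k' * q k).
  under [RHS]eq_bigr => k _ do rewrite big_split.
  rewrite big_split /= mulr2n; congr (_ + _).
    by rewrite mulr_suml; apply: eq_bigr => k _; rewrite mulr_sumr.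
  by rewrite [RHS]exchange_big mulr_suml; apply: eq_bigr => k _; rewrite mulr_sumr.
rewrite -(ler_pMn2r (n := 2)) // e sqr_sum -sumrMnl.
apply: ler_sum => k _; rewrite -sumrMnl; apply: ler_sum => k' _.
apply: amgm2; rewrite ?mulr_ge0 //.
rewrite exprMn.
apply: le_trans (_ : (p k * q k) * (p k' * q k') <= _).
  by apply: ler_pM; rewrite ?exprn_ge0 ?h.
by rewrite le_eqVlt; apply/orP; left; apply/eqP; ring.
Qed.

End CS.

Section Core.
Variable R : realType.
Local Notation C := R[i].
Variable d : nat.
Local Notation I2 := ('I_d * 'I_d)%type.

Definition psdfacts (M : I2 -> I2 -> C) := forall x y,
  [/\ 0 <= M x x, M y x = (M x y)^* & `|M x y| ^+ 2 <= M x x * M y y].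

Lemma inner_bound (C1 C2 : I2 -> I2 -> C) : psdfacts C1 -> psdfacts C2 ->
  \sum_x \sum_y `|C1 x y| * `|C2 x y| <=
  d%:R * \sum_j ((\sum_k C1 (k, j) (k, j)) * (\sum_k C2 (k, j) (k, j))).
Proof.
move=> h1 h2.
have p0 : forall x, 0 <= C1 x x by move=> x; case: (h1 x x).
have q0 : forall x, 0 <= C2 x x by move=> x; case: (h2 x x).
pose sx x := sqrtC (C1 x x * C2 x x).
have sx0 : forall x, 0 <= sx x by move=> x; rewrite sqrtC_ge0 mulr_ge0.
have sxsq : forall x, sx x ^+ 2 = C1 x x * C2 x x by move=> x; rewrite sqrtCK.
have step1 : forall x y, `|C1 x y| * `|C2 x y| <= sx x * sx y.
  move=> x y; rewrite -(ler_pXn2r (n := 2)) // ?nnegrE ?mulr_ge0 //.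
  rewrite !exprMn sxsq sxsq.
  case: (h1 x y) => _ _ c1; case: (h2 x y) => _ _ c2.
  apply: le_trans (_ : (C1 x x * C1 y y) * (C2 x x * C2 y y) <= _).
    by apply: ler_pM; rewrite ?exprn_ge0.
  by rewrite le_eqVlt; apply/orP; left; apply/eqP; ring.
apply: le_trans (_ : \sum_x \sum_y sx x * sx y <= _).
  by apply: ler_sum => x _; apply: ler_sum => y _; exact: step1.
rewrite -sqr_sum sum_pair exchange_big /=.
pose t j := \sum_k sx (k, j).
have t0 : forall j, 0 <= t j by move=> j; rewrite sumr_ge0.
apply: le_trans (_ : (\sum_j t j ^+ 2) * (\sum_(j : 'I_d) 1) <= _).
  apply: cs_le => // j; first by rewrite exprn_ge0.
  by rewrite mulr1.
rewrite sumr_const card_ord mulrC; apply: ler_wpM2l; first exact: ler0n.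
apply: ler_sum => j _; apply: cs_le => // k; first by rewrite sxsq.
Qed.

Variables (n : nat) (wt : 'I_n -> R) (C1 C2 : 'I_n -> I2 -> I2 -> C) (g : I2 -> C) (ga : C).
Hypotheses (hga : 0 <= ga) (hw : forall i, 0 <= wt i) (hC1 : forall i, psdfacts (C1 i))
  (hC2 : forall i, psdfacts (C2 i)) (hg : forall x, `|g x| <= ga)
  (hTP : forall j, \sum_i (wt i)%:C * ((\sum_k C1 i (k, j) (k, j)) * (\sum_k C2 i (k, j) (k, j))) <= 1).

Definition Fsum := \sum_x \sum_y g x * (g y)^* * \sum_i (wt i)%:C * (C1 i x y * C2 i x y).

Lemma Fsum_real : Fsum^* = Fsum.
Proof.
rewrite /Fsum rmorph_sum [RHS]exchange_big; apply: eq_bigr => x _.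
rewrite rmorph_sum; apply: eq_bigr => y _.
rewrite !rmorphM rmorph_sum /= conjCK; congr (_ * _); first by rewrite mulrC.
apply: eq_bigr => i _; rewrite !rmorphM /= conjE conjc_real.
by case: (hC1 i x y) => _ -> _; case: (hC2 i x y) => _ -> _.
Qed.

Lemma Fsum_norm : `|Fsum| <= ga ^+ 2 * (d%:R * d%:R).
Proof.
have w0 : forall i, 0 <= (wt i)%:C by move=> i; rewrite ler0c.
apply: le_trans (ler_norm_sum _ _ _) _.
apply: le_trans (_ : \sum_x \sum_y ga * ga * \sum_i (wt i)%:C * (`|C1 i x y| * `|C2 i x y|) <= _).
  apply: ler_sum => x _; apply: le_trans (ler_norm_sum _ _ _) _; apply: ler_sum => y _.
  rewrite !normrM norm_conjC; apply: ler_pM; rewrite ?mulr_ge0 //.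
    by apply: ler_pM.
  apply: le_trans (ler_norm_sum _ _ _) _; apply: ler_sum => i _.
  by rewrite !normrM (ger0_norm (w0 i)).
have -> : \sum_x \sum_y ga * ga * \sum_i (wt i)%:C * (`|C1 i x y| * `|C2 i x y|) =
    ga ^+ 2 * \sum_i (wt i)%:C * (\sum_x \sum_y `|C1 i x y| * `|C2 i x y|).
  transitivity (ga * ga * \sum_x \sum_y \sum_i (wt i)%:C * (`|C1 i x y| * `|C2 i x y|)).
    by rewrite mulr_sumr; apply: eq_bigr => x _; rewrite mulr_sumr.
  rewrite expr2; congr (_ * _).
  under eq_bigr => x _ do rewrite exchange_big.
  rewrite exchange_big; apply: eq_bigr => i _.
  by rewrite mulr_sumr; apply: eq_bigr => x _; rewrite mulr_sumr.
apply: ler_wpM2l; first exact: exprn_ge0.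
apply: le_trans (_ : \sum_i (wt i)%:C * (d%:R * \sum_j ((\sum_k C1 i (k, j) (k, j)) * (\sum_k C2 i (k, j) (k, j)))) <= _).
  by apply: ler_sum => i _; apply: ler_wpM2l => //; apply: inner_bound.
under eq_bigr => i _ do rewrite mulrCA mulr_sumr.
rewrite -mulr_sumr exchange_big /=; apply: ler_wpM2l; first exact: ler0n.
apply: le_trans (_ : \sum_(j : 'I_d) 1 <= _); last by rewrite sumr_const card_ord.
by apply: ler_sum => j _; apply: hTP.
Qed.

End Core.

Section Channel.
Variable R : realType.
Local Notation C := R[i].
Variable d : nat.
Local Notation A := (Areg d).
Variable S : {set 'I_3}.

Lemma tensS_munit (N1 : op R (loc d S) -> op R (loc d S))
  (N2 : op R (loc d (~: S)) -> op R (loc d (~: S))) (a b x y : A) :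
  tensS N1 N2 (munit R a b) x y =
  N1 (munit R (res S a) (res S b)) (res S x) (res S y) *
  N2 (munit R (res (~: S) a) (res (~: S) b)) (res (~: S) x) (res (~: S) y).
Proof.
rewrite /tensS /munit.
rewrite (eq_bigr (fun a' => (a' == a)%:R * \sum_b' (b' == b)%:R *
   (N1 (munit R (res S a') (res S b')) (res S x) (res S y) *
    N2 (munit R (res (~: S) a') (res (~: S) b')) (res (~: S) x) (res (~: S) y)))).
  by rewrite sum_delta sum_delta.
move=> a' _; rewrite mulr_sumr; apply: eq_bigr => b' _.
by rewrite -mulnb natrM /munit; ring.
Qed.

Definition glue (k k' : 'I_d) : A := [ffun t => if t \in S then k else k'].

Lemma res_glue1 k k' : res S (glue k k') = res S (cst3 k).
Proof. by apply/ffunP => t; rewrite !ffunE (valP t). Qed.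

Lemma res_glue2 k k' : res (~: S) (glue k k') = res (~: S) (cst3 k').
Proof.
apply/ffunP => t; rewrite !ffunE.
by have := valP t; rewrite in_setC => /negbTE ->.
Qed.

Lemma glue_inj : S != set0 -> ~: S != set0 ->
  injective (fun p : 'I_d * 'I_d => glue p.1 p.2).
Proof.
move=> /set0Pn [s0 hs0] /set0Pn [s1 hs1] [k1 k1'] [k2 k2'] /= e.
have := congr1 (fun f : A => f s0) e; have := congr1 (fun f : A => f s1) e.
move: hs1; rewrite in_setC => /negbTE hs1.
by rewrite /glue !ffunE hs0 hs1 => -> ->.
Qed.

End Channel.

Section Main.
Variable R : realType.
Local Notation C := R[i].
Variable d : nat.
Hypothesis hd : (2 <= d)%N.
Local Notation A := (Areg d).
Local Notation I2 := ('I_d * 'I_d)%type.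
Variables (S : {set 'I_3}) (n : nat) (wt : 'I_n -> R)
  (N1 : 'I_n -> op R (loc d S) -> op R (loc d S))
  (N2 : 'I_n -> op R (loc d (~: S)) -> op R (loc d (~: S))).
Hypotheses (hS1 : S != set0) (hS2 : ~: S != set0) (hw : forall i, 0 <= wt i)
  (cp1 : forall i, cp_map (N1 i)) (cp2 : forall i, cp_map (N2 i)).
Definition Nch := fun (X : op R A) (x y : A) => \sum_(i < n) (wt i)%:C * tensS (N1 i) (N2 i) X x y.
Hypothesis tp : trace_preserving Nch.

Definition C1 i (x y : I2) := N1 i (munit R (res S (cst3 x.2)) (res S (cst3 y.2)))
   (res S (cst3 x.1)) (res S (cst3 y.1)).
Definition C2 i (x y : I2) := N2 i (munit R (res (~: S) (cst3 x.2)) (res (~: S) (cst3 y.2)))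
   (res (~: S) (cst3 x.1)) (res (~: S) (cst3 y.1)).

Lemma C1_facts i : psdfacts (C1 i).
Proof.
move=> x y; exact: (psd_facts (res S (cst3 x.1), res S (cst3 x.2))
   (res S (cst3 y.1), res S (cst3 y.2)) (choi_psd (cp1 i))).
Qed.

Lemma C2_facts i : psdfacts (C2 i).
Proof.
move=> x y; exact: (psd_facts (res (~: S) (cst3 x.1), res (~: S) (cst3 x.2))
   (res (~: S) (cst3 y.1), res (~: S) (cst3 y.2)) (choi_psd (cp2 i))).
Qed.

Lemma hTP j : \sum_i (wt i)%:C * ((\sum_k C1 i (k, j) (k, j)) * (\sum_k C2 i (k, j) (k, j))) <= 1.
Proof.
set a := cst3 j.
have tr : trace (Nch (munit R a a)) = 1.
  rewrite tp /trace /munit (eq_bigr (fun x => (x == a)%:R * 1)) ?sum_delta // => x _.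
  by rewrite andbb mulr1.
rewrite -tr /trace /Nch exchange_big /=; apply: ler_sum => i _.
rewrite -mulr_sumr; apply: ler_wpM2l; first by rewrite ler0c.
pose h (x : A) := N1 i (munit R (res S a) (res S a)) (res S x) (res S x) *
   N2 i (munit R (res (~: S) a) (res (~: S) a)) (res (~: S) x) (res (~: S) x).
have h0 : forall x, 0 <= h x.
  move=> x; rewrite /h mulr_ge0 //.
    by case: (psd_facts (res S x, res S a) (res S x, res S a) (choi_psd (cp1 i))).
  by case: (psd_facts (res (~: S) x, res (~: S) a) (res (~: S) x, res (~: S) a) (choi_psd (cp2 i))).
under [X in _ <= X]eq_bigr => x _ do rewrite tensS_munit.
have -> : (\sum_k C1 i (k, j) (k, j)) * (\sum_k C2 i (k, j) (k, j)) =
          \sum_(p : I2) h (glue S p.1 p.2).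
  rewrite -(pair_bigA _ (fun k k' => h (glue S k k'))) /= mulr_suml; apply: eq_bigr => k _; rewrite mulr_sumr.
  by apply: eq_bigr => k' _; rewrite /h res_glue1 res_glue2.
have -> : \sum_(p : I2) h (glue S p.1 p.2) = \sum_(x in [set glue S p.1 p.2 | p : I2]) h x.
  by rewrite big_imset //= => p q _ _; apply: glue_inj.
rewrite [X in _ <= X](bigID (fun x => x \in [set glue S p.1 p.2 | p : I2])) /=.
by rewrite lerDl sumr_ge0 // => x _; apply: h0.
Qed.

Lemma fid_bound psi phi psi' phi' : structured psi phi -> structured psi' phi' ->
  (forall k j, `|\sum_z (phi' k z)^* * phi j z| <= d%:R^-1 * (sqrtd R d)^-1) ->
  fid_pure psi' (tens_id Nch (proj psi)) <= d%:R^-1.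
Proof.
move=> st st' hg.
pose g (x : I2) := \sum_z (phi' x.1 z)^* * phi x.2 z.
rewrite (fid_expand Nch st st').
have -> : \sum_k \sum_j \sum_k' \sum_j' (\sum_z (phi' k z)^* * phi j z) *
     (\sum_z (phi' k' z)^* * phi j' z)^* * Nch (munit R (cst3 j) (cst3 j')) (cst3 k) (cst3 k')
   = Fsum wt C1 C2 g.
  rewrite /Fsum sum_pair; apply: eq_bigr => k _; apply: eq_bigr => j _.
  rewrite sum_pair; apply: eq_bigr => k' _; apply: eq_bigr => j' _.
  congr (_ * _); rewrite /Nch; apply: eq_bigr => i _.
  by rewrite tensS_munit.
have ga0 : 0 <= d%:R^-1 * (sqrtd R d)^-1 :> C.
  by rewrite mulr_ge0 // ?invr_ge0 ?ler0n // ltW // s_gt0.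
have nb := Fsum_norm ga0 hw C1_facts C2_facts (fun x => hg x.1 x.2) hTP.
have re := Fsum_real wt g C1_facts C2_facts.
have hr : Fsum wt C1 C2 g \is Num.real by rewrite CrealE re.
apply: le_trans (real_ler_norm hr) _; apply: le_trans nb _.
have dn0 : (d%:R : C) != 0 by rewrite pnatr_eq0; case: d hd.
have ss : (sqrtd R d)^-1 ^+ 2 = d%:R^-1 by rewrite expr2 s_inv2.
rewrite exprMn ss le_eqVlt; apply/orP; left; apply/eqP; field.
by rewrite dn0.
Qed.

End Main.

Lemma gbound1 (R : realType) (d : nat) (hd : (2 <= d)%N) (t l k j : 'I_d) :
  `|\sum_z (phiX R t k z)^* * phiP R l j z| <= d%:R^-1 * (sqrtd R d)^-1.
Proof.
apply: le_trans (ler_norm_sum _ _ _) _.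
apply: le_trans (_ : \sum_z d%:R^-1 * `|phiP R l j z| <= _).
  apply: ler_sum => z _; rewrite normrM norm_conjC; apply: ler_wpM2r.
    exact: normr_ge0.
  exact: norm_phiX_le.
by rewrite -mulr_sumr sum_norm_phiP.
Qed.

Lemma gbound2 (R : realType) (d : nat) (hd : (2 <= d)%N) (t l k j : 'I_d) :
  `|\sum_z (phiP R l k z)^* * phiX R t j z| <= d%:R^-1 * (sqrtd R d)^-1.
Proof.
apply: le_trans (ler_norm_sum _ _ _) _.
apply: le_trans (_ : \sum_z `|phiP R l k z| * d%:R^-1 <= _).
  apply: ler_sum => z _; rewrite normrM norm_conjC; apply: ler_wpM2l.
    exact: normr_ge0.
  exact: norm_phiX_le.
by rewrite -mulr_suml sum_norm_phiP // mulrC.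
Qed.

Unset Implicit Arguments.
Local Open Scope complex_scope.

Theorem theorem1 (R : realType) (d : nat) (hd : (2 <= d)%N) :
  (* (i) perfect hiding *)
  (forall (E : finType) (rho : op R ('I_d * E)%type),
      is_state rho ->
      commit false rho = commit true rho /\
      (forall E0 E1 : op R ('I_d * E)%type, povm2 E0 E1 ->
         guess_prob rho E0 E1 <= 2^-1)) /\
  (* (ii) 1/d-honest-binding against separable operations on A *)
  (forall (N : op R (Areg d) -> op R (Areg d)), separable_channel N ->
   forall (b : bool) (p p' : {perm 'I_d}) (m : 'I_d),
     fid_pure (Xi R (~~ b) p' m) (tens_id N (proj (Xi R b p m)))
       <= (d%:R)^-1).
Proof.
split.
  by move=> E rho hs; apply: part1.
move=> N [S [hS1 hS2 [n [wt [N1 [N2 [hyp hsum eqN tpN]]]]]]] b p p' m.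
have hw : forall i, 0 <= wt i by move=> i; case: (hyp i).
have cp1 : forall i, cp_map (N1 i) by move=> i; case: (hyp i) => _ [].
have cp2 : forall i, cp_map (N2 i) by move=> i; case: (hyp i) => _ [].
subst N.
case: b => /=.
  apply: (fid_bound hd hS1 hS2 hw cp1 cp2 tpN (Phi_struct R (p m)) (Xi0_struct R p' m)).
  by move=> k j; apply: gbound1.
apply: (fid_bound hd hS1 hS2 hw cp1 cp2 tpN (Xi0_struct R p m) (Phi_struct R (p' m))).
by move=> k j; apply: gbound2.
Qed.
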